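(* Let $n\ge4$, let $0<\alpha_2,\alpha_3<1$, $\alpha_1=1-\alpha_2-\alpha_3$, and $\lambda^*=\big(\frac{n-1+\alpha_1}{n},\frac{\alpha_2}{n},\frac{\alpha_3}{n}\big)$. Let $i_1$ be an integer with $0\le i_1\le n-4$ and $n-i_1$ even, and let $\mathfrak{p}(i_1)=|l_i(\lambda^* )|$ for $i=\big(i_1,\frac{n-i_1}{2},\frac{n-i_1}{2}\big)$. Then $$\mathfrak{p}(i_1)\le\frac{1}{e(\ln n-1)}\cdot\frac{\Gamma(n+1)}{i_1!\,\Gamma(n-i_1)}\cdot\frac{4\alpha_2(1-\alpha_2)}{(n-i_1)(n-i_1-1)}.$$
   Context: For an integer $n\ge1$ let $I=\{i=(i_1,i_2,i_3)\in\mathbb{Z}_+^3: i_1+i_2+i_3=n\}$ and $l_i(\lambda)=\prod_{s=1}^{3}\frac{1}{i_s!}\prod_{t=0}^{i_s-1}(n\lambda_s-t)$ for $\lambda=(\lambda_1,\lambda_2,\lambda_3)$ (Lagrange fundamental polynomials for the equally spaced nodes $i/n$ of a triangle in barycentric coordinates). *)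

(* Defs.v *)
From Stdlib Require Import Reals Lra Lia Arith.
Open Scope R_scope.

Fixpoint fallp (x : R) (k : nat) : R :=
  match k with
  | O => 1
  | S k' => fallp x k' * (x - INR k')
  end.

Definition lfac (n : nat) (lam : R) (k : nat) : R :=
  fallp (INR n * lam) k / INR (fact k).

(* Lagrange fundamental polynomial l_i(lambda), i = (i1,i2,i3), lambda = (l1,l2,l3) *)
Definition lagr (n i1 i2 i3 : nat) (l1 l2 l3 : R) : R :=
  lfac n l1 i1 * lfac n l2 i2 * lfac n l3 i3.

(* Main.v *)
Require Import Defs.
From Stdlib Require Import Reals Lra Lia Arith.
Open Scope R_scope.

Lemma exp_le' x y : x <= y -> exp x <= exp y.
Proof. intros [H|H]. left; apply exp_increasing; auto. subst; lra. Qed.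

Lemma ln_le' x y : 0 < x -> x <= y -> ln x <= ln y.
Proof. intros Hx [H|H]. left; apply ln_increasing; auto. subst; lra. Qed.

Lemma exp_ge_e y : exp 1 * y <= exp y.
Proof.
  replace (exp y) with (exp 1 * exp (y - 1)) by (rewrite <- exp_plus; f_equal; ring).
  apply Rmult_le_compat_l. left; apply exp_pos.
  pose proof (exp_ineq1_le (y-1)); lra.
Qed.

Lemma e_ge : 5/2 <= exp 1.
Proof.
  assert (E: exp 1 = exp (1/8) ^ 8).
  { simpl. rewrite Rmult_1_r. repeat rewrite <- exp_plus. f_equal. field. }
  rewrite E. pose proof (exp_ineq1_le (1/8)).
  apply Rle_trans with ((9/8)^8). simpl; lra.
  apply pow_incr; lra.
Qed.

Lemma ln_step (j : R) : 0 < j -> ln (j + 1) - ln j <= 1 / j.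
Proof.
  intro Hj.
  assert (H : ln (j+1) <= ln (exp (ln j + 1/j))).
  { apply ln_le'. lra. rewrite exp_plus, exp_ln by auto.
    pose proof (exp_ineq1_le (1/j)).
    apply Rle_trans with (j * (1 + 1/j)). right; field; lra.
    apply Rmult_le_compat_l; lra. }
  rewrite ln_exp in H. lra.
Qed.

Lemma step_exp j x : 0 < j -> 0 <= x -> 1 - x / j <= exp (- x * (ln (j+1) - ln j)).
Proof.
  intros Hj Hx.
  apply Rle_trans with (exp (- (x / j))).
  pose proof (exp_ineq1_le (-(x/j))); lra.
  apply exp_le'. pose proof (ln_step j Hj).
  assert (x * (ln (j + 1) - ln j) <= x * (1/j)) by (apply Rmult_le_compat_l; auto).
  replace (x/j) with (x*(1/j)) by (field; lra). lra.
Qed.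

Lemma fallp_S_l k x : fallp x (S k) = x * fallp (x - 1) k.
Proof.
  induction k. simpl. ring.
  change (fallp x (S (S k))) with (fallp x (S k) * (x - INR (S k))).
  rewrite IHk. simpl fallp at 2. rewrite S_INR. ring.
Qed.

Fixpoint q (x : R) (k : nat) : R :=
  match k with O => 1 | S k' => q x k' * (1 - x / INR (S k')) end.

Lemma abs_fallp x k : 0 < x < 1 -> Rabs (fallp x (S k)) = x * INR (fact k) * q x k.
Proof.
  intro Hx. induction k.
  simpl. rewrite Rabs_pos_eq; lra.
  change (fallp x (S (S k))) with (fallp x (S k) * (x - INR (S k))).
  rewrite Rabs_mult, IHk. pose proof (pos_INR k).
  rewrite Rabs_left by (rewrite S_INR; lra).
  rewrite fact_simpl, mult_INR. change (q x (S k)) with (q x k * (1 - x / INR (S k))). rewrite S_INR. field. lra.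
Qed.

Lemma q_bounds x k : 0 <= x <= 1 -> 0 <= q x k <= 1.
Proof.
  intro Hx. induction k. simpl; lra.
  change (q x (S k)) with (q x k * (1 - x / INR (S k))). rewrite S_INR. pose proof (pos_INR k).
  assert (0 <= x / (INR k + 1) <= 1).
  { split. unfold Rdiv; apply Rmult_le_pos; [lra| left; apply Rinv_0_lt_compat; lra].
    apply Rmult_le_reg_r with (INR k + 1). lra.
    field_simplify; lra. }
  split. apply Rmult_le_pos; lra.
  replace 1 with (1*1) at 3 by ring. apply Rmult_le_compat; lra.
Qed.

Lemma q_le1 x k : 0 <= x <= 1 -> q x (S k) <= 1 - x.
Proof.
  intro Hx. induction k. simpl. lra.
  change (q x (S (S k))) with (q x (S k) * (1 - x / INR (S (S k)))).
  pose proof (q_bounds x (S k) Hx).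
  rewrite S_INR. pose proof (pos_INR (S k)).
  assert (0 <= x / (INR (S k) + 1) <= 1).
  { split. unfold Rdiv; apply Rmult_le_pos; [lra| left; apply Rinv_0_lt_compat; lra].
    apply Rmult_le_reg_r with (INR (S k) + 1). lra.
    field_simplify; lra. }
  replace (1 - x) with ((1-x)*1) by ring. apply Rmult_le_compat; lra.
Qed.

Lemma q_exp x k : 0 <= x <= 1 -> q x k <= exp (- x * ln (INR k + 1)).
Proof.
  intro Hx. induction k. simpl. rewrite Rplus_0_l, ln_1, Rmult_0_r, exp_0. lra.
  change (q x (S k)) with (q x k * (1 - x / INR (S k))). pose proof (pos_INR k). pose proof (q_bounds x k Hx).
  rewrite S_INR.
  assert (0 <= 1 - x / (INR k + 1)).
  { assert (x / (INR k + 1) <= 1). apply Rmult_le_reg_r with (INR k + 1). lra.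
    field_simplify; lra. lra. }
  apply Rle_trans with (exp (- x * ln (INR k + 1)) * exp (- x * (ln (INR k + 1 + 1) - ln (INR k + 1)))).
  apply Rmult_le_compat; auto; try lra. apply step_exp; lra.
  rewrite <- exp_plus. right. f_equal. ring.
Qed.

Lemma t1 i c s a3 : (2 <= c)%nat -> 0 < a3 -> a3 <= s < 2 ->
  0 <= fallp (INR (i + c) - s) i <=
  INR (fact (i + c)) / INR (fact c) * exp (- a3 * (ln (INR (i + c) + 1) - ln (INR c + 1))).
Proof.
  intros Hc Ha Hs. induction i.
  simpl. rewrite Rminus_diag, Rmult_0_r, exp_0. split. lra. right; field. apply INR_fact_neq_0.
  rewrite fallp_S_l.
  replace (S i + c)%nat with (S (i + c)) by lia.
  rewrite S_INR. replace (INR (i + c) + 1 - s - 1) with (INR (i + c) - s) by ring.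
  destruct IHi as [H0 H1].
  assert (Hic: 2 <= INR (i + c)) by (replace 2 with (INR 2) by (simpl; ring); apply le_INR; lia).
  split. apply Rmult_le_pos; lra.
  set (J := INR (i + c) + 1).
  assert (HJ: INR (i+c) + 1 - s <= J * exp (- a3 * (ln (J + 1) - ln J))).
  { apply Rle_trans with (J * (1 - a3 / J)). replace (J*(1-a3/J)) with (J - a3) by (field; unfold J; lra). unfold J in *; lra.
    apply Rmult_le_compat_l. unfold J; lra. apply step_exp; unfold J; lra. }
  apply Rle_trans with (J * exp (- a3 * (ln (J + 1) - ln J)) *
     (INR (fact (i + c)) / INR (fact c) * exp (- a3 * (ln J - ln (INR c + 1))))).
  apply Rmult_le_compat; auto; try lra; unfold J; lra.
  change (fact (S (i + c))) with (S (i+c) * fact (i+c))%nat. rewrite mult_INR, S_INR. fold J.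
  right. replace (- a3 * (ln (J + 1) - ln (INR c + 1))) with
    ((- a3 * (ln (J + 1) - ln J)) + (- a3 * (ln J - ln (INR c + 1)))) by ring.
  rewrite exp_plus. field. apply INR_fact_neq_0.
Qed.

Lemma Rabs_divf x k : Rabs (x / INR (fact k)) = Rabs x / INR (fact k).
Proof.
  unfold Rdiv. rewrite Rabs_mult, Rabs_inv, (Rabs_pos_eq (INR (fact k))); auto.
  left; apply INR_fact_lt_0.
Qed.

Lemma key a L : 0 < a -> 0 < L -> a * exp (- a * L) <= 1 / (exp 1 * L).
Proof.
  intros Ha HL. pose proof (exp_ge_e (a * L)). pose proof (exp_pos 1).
  pose proof (exp_pos (- a * L)).
  assert (HE: exp (a * L) * exp (- a * L) = 1) by (rewrite <- exp_plus; replace (a*L + - a*L) with 0 by ring; apply exp_0).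
  apply Rmult_le_reg_r with (exp 1 * L). apply Rmult_lt_0_compat; lra.
  replace (1 / (exp 1 * L) * (exp 1 * L)) with 1 by (field; lra).
  replace (a * exp (- a * L) * (exp 1 * L)) with ((exp 1 * (a * L)) * exp (- a * L)) by ring.
  apply Rle_trans with (exp (a * L) * exp (- a * L)); [apply Rmult_le_compat_r; lra | lra].
Qed.

Theorem lemma21 (n i1 : nat) (a2 a3 : R) :
  (4 <= n)%nat ->
  0 < a2 < 1 -> 0 < a3 < 1 ->
  (i1 <= n - 4)%nat ->
  Nat.Even (n - i1) ->
  Rabs (lagr n i1 ((n - i1) / 2) ((n - i1) / 2)
          ((INR n - 1 + (1 - a2 - a3)) / INR n) (a2 / INR n) (a3 / INR n))
  <= 1 / (exp 1 * (ln (INR n) - 1))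
     * (INR (fact n) / (INR (fact i1) * INR (fact (n - i1 - 1))))
     * (4 * a2 * (1 - a2) / (INR (n - i1) * INR (n - i1 - 1))).
Proof.
  intros Hn Ha2 Ha3 Hi [k Hk].
  destruct k as [|k']; [lia|].
  assert (Hk' : (1 <= k')%nat) by lia.
  assert (Hdiv: ((n - i1) / 2)%nat = S k') by (rewrite Hk, Nat.mul_comm, Nat.div_mul; lia).
  rewrite Hdiv.
  assert (Hn': n = (i1 + 2 * S k')%nat) by lia.
  assert (HnR : 4 <= INR n) by (replace 4 with (INR 4) by (simpl; ring); apply le_INR; lia).
  unfold lagr, lfac.
  replace (INR n * ((INR n - 1 + (1 - a2 - a3)) / INR n)) with (INR (i1 + 2 * S k') - (a2 + a3))
    by (rewrite <- Hn'; field; lra).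
  replace (INR n * (a2 / INR n)) with a2 by (field; lra).
  replace (INR n * (a3 / INR n)) with a3 by (field; lra).
  rewrite !Rabs_mult, !Rabs_divf, !abs_fallp by lra.
  destruct (t1 i1 (2 * S k') (a2 + a3) a3) as [F0 F1]; try lia; try lra.
  rewrite <- Hn' in F0, F1 |- *.
  rewrite (Rabs_pos_eq _ F0).
  replace (n - i1 - 1)%nat with (S (2 * k')) by lia.
  rewrite Hk.
  replace (2 * S k')%nat with (S (S (2 * k'))) in F1 by lia.
  rewrite (fact_simpl (S (2 * k'))) in F1.
  replace (2 * S k')%nat with (S (S (2 * k'))) by lia.

  rewrite (fact_simpl k'). rewrite !mult_INR, !S_INR, ?mult_INR in *. simpl (INR 2) in *.
  set (N := INR (fact n)) in *.
  set (I := INR (fact i1)) in *.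
  set (D := INR (fact (S (2 * k')))) in *.
  set (K := INR (fact k')) in *.
  set (F := fallp (INR n - (a2 + a3)) i1) in *.
  set (kk := INR k') in *.
  assert (HN : 0 < N) by apply INR_fact_lt_0.
  assert (HI : 0 < I) by apply INR_fact_lt_0.
  assert (HD : 0 < D) by apply INR_fact_lt_0.
  assert (HK : 0 < K) by apply INR_fact_lt_0.
  assert (Hkk : 1 <= kk) by (replace 1 with (INR 1) by reflexivity; apply le_INR; lia).
  pose proof (q_bounds a2 k') as Q2. pose proof (q_le1 a2 (pred k')) as Q2'.
  replace (S (pred k')) with k' in Q2' by lia.
  pose proof (q_bounds a3 k') as Q3. pose proof (q_exp a3 k') as Q3'.
  set (kr := kk + 1) in *.
  assert (Hkr : 2 <= kr) by (unfold kr; lra).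
  replace ((1 + 1) * kk + 1 + 1 + 1) with (2 * kr + 1) in F1 by (unfold kr; ring).
  replace ((1 + 1) * kk + 1 + 1) with (2 * kr) in F1 |- * by (unfold kr; ring).
  replace ((1 + 1) * kk + 1) with (2 * kr - 1) by (unfold kr; ring).
  replace (INR k' + 1) with kr in Q3' by reflexivity.
  specialize (Q2 ltac:(lra)). specialize (Q2' ltac:(lra)).
  specialize (Q3 ltac:(lra)). specialize (Q3' ltac:(lra)).
  set (q2 := q a2 k') in *. set (q3 := q a3 k') in *.
  set (E := 1 / (exp 1 * (ln (INR n) - 1))).
  pose proof e_ge as He. pose proof exp_le_3 as He3.
  assert (HLb : 0 < ln (INR n) - 1).
  { assert (ln (exp 1) < ln (INR n)) by (apply ln_increasing; [apply exp_pos| lra]).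
    rewrite ln_exp in H. lra. }
  set (L := ln (INR n + 1) - ln (2 * kr + 1) + ln kr).
  assert (HL : ln (INR n) - 1 <= L).
  { unfold L.
    assert (ln (INR n) <= ln (INR n + 1)) by (apply ln_le'; lra).
    assert (ln (2 * kr + 1) <= ln (exp (ln kr + 1))).
    { apply ln_le'. lra. rewrite exp_plus, exp_ln by lra.
      apply Rle_trans with (kr * (5/2)). lra. apply Rmult_le_compat_l; lra. }
    rewrite ln_exp in H0. lra. }
  assert (HFq : F * q3 <= N / (2 * kr * D) * exp (- a3 * L)).
  { apply Rle_trans with (N / (2 * kr * D) * exp (- a3 * (ln (INR n + 1) - ln (2 * kr + 1))) * exp (- a3 * ln kr)).
    apply Rmult_le_compat; lra.
    rewrite Rmult_assoc, <- exp_plus. right. unfold L. f_equal. f_equal. ring. }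
  assert (Hk3 : a3 * exp (- a3 * L) <= E).
  { apply Rle_trans with (a3 * exp (- a3 * (ln (INR n) - 1))).
    apply Rmult_le_compat_l. lra. apply exp_le'. nra.
    apply key; lra. }
  assert (HE0 : 0 <= a3 * exp (- a3 * L)) by (pose proof (exp_pos (- a3 * L)); nra).
  replace (F / I * (a2 * K * q2 / (kr * K)) * (a3 * K * q3 / (kr * K)))
    with ((F * q3) * q2 * a2 * a3 / (I * kr * kr)) by (field; lra).
  apply Rle_trans with ((N / (2 * kr * D) * exp (- a3 * L)) * (1 - a2) * a2 * a3 / (I * kr * kr)).
  { unfold Rdiv. apply Rmult_le_compat_r. left; apply Rinv_0_lt_compat; repeat apply Rmult_lt_0_compat; lra.
    apply Rmult_le_compat_r. lra. apply Rmult_le_compat_r. lra.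
    apply Rmult_le_compat; try lra. apply Rmult_le_pos; lra. }
  replace (N / (2 * kr * D) * exp (- a3 * L) * (1 - a2) * a2 * a3 / (I * kr * kr))
    with ((a3 * exp (- a3 * L)) * (N * (1 - a2) * a2 / (2 * kr * D * I * kr * kr))) by (field; lra).
  replace (E * (N / (I * D)) * (4 * a2 * (1 - a2) / (2 * kr * (2 * kr - 1))))
    with (E * (N * (1 - a2) * a2 / (2 * kr * D * I)) * (4 / (2 * kr - 1))) by (field; lra).
  assert (HX : 0 <= N * (1 - a2) * a2 / (2 * kr * D * I)).
  { unfold Rdiv. apply Rmult_le_pos. apply Rmult_le_pos; nra.
    left; apply Rinv_0_lt_compat. apply Rmult_lt_0_compat; nra. }
  replace (N * (1 - a2) * a2 / (2 * kr * D * I * kr * kr))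
    with (N * (1 - a2) * a2 / (2 * kr * D * I) * (1 / (kr * kr))) by (field; lra).
  rewrite <- Rmult_assoc. apply Rmult_le_compat.
  apply Rmult_le_pos; lra.
  unfold Rdiv; apply Rmult_le_pos; [lra| left; apply Rinv_0_lt_compat; nra].
  apply Rmult_le_compat_r; lra.
  apply Rmult_le_reg_r with (kr * kr * (2 * kr - 1)). nra.
  field_simplify; try lra. nra.
Qed.
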